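(* Let $(\mathbf{H},m,\Delta)$ be a commutative and cocommutative (connected) set Hopf monoid, with each $\mathbf{H}[I]$ equipped with the reassembly partial order $\le_r$ (so that $\mathbf{H}$ is a self-adjoint poset Hopf monoid). Let $I=S\sqcup T$, $x\in\mathbf{H}[S]$ and $y\in\mathbf{H}[T]$. Then $\omega_x\cdot\omega_y=\omega_{x\cdot y}$ in $\mathbf{k}\mathbf{H}[I]$, where $x\cdot y=m_{S,T}(x,y)$ and, for $z\in\mathbf{H}[J]$, $\omega_z=\sum_{z\le_r w}\mu(z,w)\,w$ with $\mu$ the Möbius function of $(\mathbf{H}[J],\le_r)$.
   Context: $\mathbf{k}$ is a field of characteristic $0$. A (connected) set species $\mathbf{H}$ assigns to each finite set $I$ a finite set $\mathbf{H}[I]$, $\mathbf{H}[\emptyset]=\{1\}$, and bijections functorially to bijections. A set Hopf monoid has maps $m_{S,T}:\mathbf{H}[S]\times\mathbf{H}[T]\to\mathbf{H}[S\sqcup T]$ (natural, associative, unital) and $\Delta_{S,T}:\mathbf{H}[S\sqcup T]\to\mathbf{H}[S]\times\mathbf{H}[T]$ (natural, coassociative, counital), satisfying compatibility: for $I=S_1\sqcup S_2=T_1\sqcup T_2$, $A=S_1\cap T_1$, $B=S_1\cap T_2$, $C=S_2\cap T_1$, $D=S_2\cap T_2$, if $\Delta_{A,B}(x)=(x_A,x_B)$, $\Delta_{C,D}(y)=(y_C,y_D)$ then $\Delta_{T_1,T_2}(m_{S_1,S_2}(x,y))=(m_{A,C}(x_A,y_C),m_{B,D}(x_B,y_D))$.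 Commutative: $m_{S,T}(x,y)=m_{T,S}(y,x)$; cocommutative: $\Delta_{S,T}(x)=(y,z)\iff\Delta_{T,S}(x)=(z,y)$. Reassembly order: $x\le_r y$ in $\mathbf{H}[I]$ iff $y=m_{S_1,\dots,S_k}\circ\Delta_{S_1,\dots,S_k}(x)$ for some set partition $S_1\sqcup\dots\sqcup S_k=I$ (iterated maps via (co)associativity); for commutative cocommutative $\mathbf{H}$ this is a partial order. $\mathbf{k}\mathbf{H}[I]$ is the vector space with basis $\mathbf{H}[I]$, multiplication extended bilinearly. *)

(* Defs.v *)
From HB Require Import structures.
From mathcomp Require Import all_boot all_order fingroup perm all_algebra.
Set Implicit Arguments. Unset Strict Implicit. Unset Printing Implicit Defensive.
Import GRing.Theory.
Local Open Scope ring_scope.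

(* A (connected) set species, restricted to the finite subsets of a finite
   label type L, is encoded without dependent types: [shE] is the (finite)
   disjoint union of all H[I], I \subset L, and [hdom e] is the label set I
   with e \in H[I].  Thus H[I] = [set e | hdom e == I].
   Bijections between label sets are given by permutations of L ([relabel]),
   the action depending only on the restriction to the domain.
   [hmul x y] = m_{hdom x, hdom y}(x, y) (meaningful for disjoint domains);
   [hdelta S x] = Delta_{S, hdom x \ S}(x) (meaningful for S \subset hdom x). *)
Record setHopfData (L : finType) := SetHopfData {
  shE :> finType;
  hdom : shE -> {set L};
  relabel : {perm L} -> shE -> shE;
  hone : shE;
  hmul : shE -> shE -> shE;
  hdelta : {set L} -> shE -> shE * shE
}.

Section SetHopf.
Variables (L : finType) (H : setHopfData L).
Local Notation hdom := (@hdom L H).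
Local Notation relabel := (@relabel L H).
Local Notation hone := (@hone L H).
Local Notation hmul := (@hmul L H).
Local Notation hdelta := (@hdelta L H).

Definition is_set_species : Prop :=
  [/\ hdom hone = set0,
      (forall e, hdom e = set0 -> e = hone),
      (forall (s : {perm L}) x, hdom (relabel s x) = s @: hdom x) &
      [/\ (forall x, relabel 1%g x = x),
      (forall s t x, relabel (s * t)%g x = relabel t (relabel s x)) &
      (forall (s t : {perm L}) x, {in hdom x, s =1 t} -> relabel s x = relabel t x)]].

Definition is_set_Hopf_monoid : Prop :=
  is_set_species /\ [/\ 
      (forall x y, [disjoint hdom x & hdom y] -> hdom (hmul x y) = hdom x :|: hdom y),
      (forall (S : {set L}) x, S \subset hdom x ->
         hdom (hdelta S x).1 = S /\ hdom (hdelta S x).2 = hdom x :\: S) &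
      (forall (s : {perm L}) x y, [disjoint hdom x & hdom y] ->
         relabel s (hmul x y) = hmul (relabel s x) (relabel s y))] /\ [/\ 
      (forall (s : {perm L}) (S : {set L}) x, S \subset hdom x ->
         hdelta (s @: S) (relabel s x) =
           (relabel s (hdelta S x).1, relabel s (hdelta S x).2)),
      (forall x y z, [disjoint hdom x & hdom y] -> [disjoint hdom x & hdom z] ->
         [disjoint hdom y & hdom z] -> hmul (hmul x y) z = hmul x (hmul y z)),
      (forall x, hmul hone x = x /\ hmul x hone = x) &
      (forall (R S : {set L}) x, R \subset hdom x -> S \subset hdom x -> [disjoint R & S] ->
         let p := hdelta (R :|: S) x in let q := hdelta R p.1 in
         let r := hdelta R x in let t := hdelta S r.2 in
         [/\ q.1 = r.1, q.2 = t.1 & p.2 = t.2])] /\ [/\ 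
      (forall x, hdelta set0 x = (hone, x) /\ hdelta (hdom x) x = (x, hone)) &
      (forall x y (T1 : {set L}), [disjoint hdom x & hdom y] -> T1 \subset hdom x :|: hdom y ->
         let a := hdelta (T1 :&: hdom x) x in let b := hdelta (T1 :&: hdom y) y in
         hdelta T1 (hmul x y) = (hmul a.1 b.1, hmul a.2 b.2))].

Definition is_commutative : Prop :=
  forall x y, [disjoint hdom x & hdom y] -> hmul x y = hmul y x.

Definition is_cocommutative : Prop :=
  forall (S : {set L}) x, S \subset hdom x ->
    hdelta S x = ((hdelta (hdom x :\: S) x).2, (hdelta (hdom x :\: S) x).1).

(* m_{S1,...,Sk} o Delta_{S1,...,Sk} (x) for the ordered blocks S1,...,Sk,
   computed iteratively (well defined by (co)associativity). *)
Fixpoint reassemble (Ss : seq {set L}) (x : H) : H :=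
  match Ss with
  | [::] => x
  | B :: Ss' => hmul (hdelta B x).1 (reassemble Ss' (hdelta B x).2)
  end.

Definition le_r (x y : H) : bool :=
  [exists P : {set {set L}}, partition P (hdom x) && (y == reassemble (enum P) x)].

Definition lt_r (x y : H) : bool := (y != x) && le_r x y.

(* Moebius function of the poset (H, <=_r):
   mu(x,x) = 1, mu(x,y) = - sum_{x <= u < y} mu(x,u) if x < y, 0 otherwise.
   Strict chains have length < #|H|, so the fuel #|H|.+1 suffices. *)
Fixpoint mobius_fuel (R : pzRingType) (n : nat) (x y : H) : R :=
  match n with
  | 0 => 0
  | n'.+1 =>
      if x == y then 1
      else if le_r x y then
        - \sum_(u : H | le_r x u && lt_r u y) mobius_fuel R n' x u
      else 0
  end.

Definition mobius (R : pzRingType) (x y : H) : R := mobius_fuel R #|H|.+1 x y.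

(* omega_z = sum_{z <=_r w} mu(z,w) w, as an element of k H (coefficient
   functions H -> R; omega_z is supported in H[hdom z]). *)
Definition omega (R : pzRingType) (z : H) : {ffun H -> R} :=
  [ffun w => if le_r z w then mobius R z w else 0].

(* product kH[S] x kH[T] -> kH[S \sqcup T], bilinear extension of m_{S,T} *)
Definition kprod (R : pzRingType) (S T : {set L}) (a b : {ffun H -> R})
  : {ffun H -> R} :=
  [ffun w => \sum_(u : H | hdom u == S) \sum_(v : H | hdom v == T)
               (if hmul u v == w then a u * b v else 0)].

End SetHopf.

(* Main.v *)
Require Import Defs.
From HB Require Import structures.
From mathcomp Require Import all_boot all_order fingroup perm all_algebra.
From mathcomp Require Import zify.
Set Implicit Arguments. Unset Strict Implicit. Unset Printing Implicit Defensive.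
Import GRing.Theory.

Section Core.
Variables (L : finType) (H : setHopfData L).
Local Notation hdom := (@hdom L H).
Local Notation hone := (@hone L H).
Local Notation hmul := (@hmul L H).
Local Notation hdelta := (@hdelta L H).

Hypothesis dom1 : hdom hone = set0.
Hypothesis dom0E : forall e, hdom e = set0 -> e = hone.
Hypothesis domM : forall x y, [disjoint hdom x & hdom y] -> hdom (hmul x y) = hdom x :|: hdom y.
Hypothesis domD : forall (S : {set L}) x, S \subset hdom x ->
         hdom (hdelta S x).1 = S /\ hdom (hdelta S x).2 = hdom x :\: S.
Hypothesis mulA : forall x y z, [disjoint hdom x & hdom y] -> [disjoint hdom x & hdom z] ->
         [disjoint hdom y & hdom z] -> hmul (hmul x y) z = hmul x (hmul y z).
Hypothesis mul1 : forall x, hmul hone x = x /\ hmul x hone = x.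
Hypothesis coassoc : forall (R S : {set L}) x, R \subset hdom x -> S \subset hdom x -> [disjoint R & S] ->
         let p := hdelta (R :|: S) x in let q := hdelta R p.1 in
         let r := hdelta R x in let t := hdelta S r.2 in
         [/\ q.1 = r.1, q.2 = t.1 & p.2 = t.2].
Hypothesis counit : forall x, hdelta set0 x = (hone, x) /\ hdelta (hdom x) x = (x, hone).
Hypothesis compat : forall x y (T1 : {set L}), [disjoint hdom x & hdom y] -> T1 \subset hdom x :|: hdom y ->
         let a := hdelta (T1 :&: hdom x) x in let b := hdelta (T1 :&: hdom y) y in
         hdelta T1 (hmul x y) = (hmul a.1 b.1, hmul a.2 b.2).
Hypothesis comm : forall x y, [disjoint hdom x & hdom y] -> hmul x y = hmul y x.
Hypothesis cocomm : forall (S : {set L}) x, S \subset hdom x ->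
    hdelta S x = ((hdelta (hdom x :\: S) x).2, (hdelta (hdom x :\: S) x).1).

Lemma disjI (A B : {set L}) : (forall z, z \in A -> z \in B -> False) -> [disjoint A & B].
Proof. move=> h; rewrite disjoints_subset; apply/subsetP => z zA; rewrite inE; apply/negP => zB; exact: h z zA zB. Qed.

Definition res (B : {set L}) (x : H) : H := (hdelta B x).1.
Definition resi (C : {set L}) (a : H) : H := res (C :&: hdom a) a.

Lemma res_dom (B : {set L}) (x : H) : B \subset hdom x -> hdom (res B x) = B.
Proof. by move=> sB; case: (domD sB). Qed.

Lemma delta2 (B : {set L}) (x : H) : B \subset hdom x -> (hdelta B x).2 = res (hdom x :\: B) x.
Proof. by move=> sB; rewrite (cocomm sB). Qed.

Lemma resK (A B : {set L}) (x : H) : A \subset B -> B \subset hdom x -> res A (res B x) = res A x.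
Proof.
move=> sAB sBx.
have sAx : A \subset hdom x by apply: subset_trans sAB sBx.
have sDx : B :\: A \subset hdom x by apply: subset_trans (subsetDl _ _) sBx.
have dj : [disjoint A & B :\: A] by apply: disjI => z zA; rewrite !inE zA.
have := coassoc sAx sDx dj.
have -> : A :|: B :\: A = B by rewrite setDE setUIr setUCr setIT; apply/setUidPr.
by case.
Qed.

Lemma res_all (x : H) : res (hdom x) x = x.
Proof. by rewrite /res (proj2 (counit x)). Qed.

Lemma res0 (x : H) : res set0 x = hone.
Proof. by rewrite /res (proj1 (counit x)). Qed.

Lemma resi_mul (C : {set L}) (a b : H) : [disjoint hdom a & hdom b] ->
  resi C (hmul a b) = hmul (resi C a) (resi C b).
Proof.
move=> dab; rewrite /resi (domM dab) /res.
have sub : C :&: (hdom a :|: hdom b) \subset hdom a :|: hdom b by apply: subsetIr.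
rewrite (compat dab sub) /=.
by rewrite -setIA (setIidPr (subsetUl _ _)) -setIA (setIidPr (subsetUr _ _)).
Qed.

Lemma resi_one (C : {set L}) : resi C hone = hone.
Proof. by rewrite /resi dom1 setI0 res0. Qed.

Lemma resi_res (C B : {set L}) (x : H) : B \subset hdom x -> resi C (res B x) = res (C :&: B) x.
Proof. by move=> sB; rewrite /resi res_dom // resK // ?subsetIr. Qed.

Lemma resiE (C : {set L}) (a : H) : C \subset hdom a -> resi C a = res C a.
Proof. by move=> sC; rewrite /resi (setIidPl sC). Qed.


Lemma disjUl (A B C : {set L}) : [disjoint A :|: B & C] = [disjoint A & C] && [disjoint B & C].
Proof. by rewrite -!setI_eq0 setIUl setU_eq0. Qed.
Lemma disjUr (A B C : {set L}) : [disjoint C & A :|: B] = [disjoint C & A] && [disjoint C & B].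
Proof. by rewrite -!setI_eq0 setIUr setU_eq0. Qed.

Definition disj (s : seq {set L}) : bool :=
  (\sum_(A <- s) #|A| == #|\bigcup_(A <- s) A|)%N.

Lemma card_bigcup_le (s : seq {set L}) : (#|\bigcup_(A <- s) A| <= \sum_(A <- s) #|A|)%N.
Proof.
elim: s => [|A s IH]; first by rewrite !big_nil cards0.
rewrite !big_cons cardsU; lia.
Qed.

Lemma disj_cons (A : {set L}) s :
  disj (A :: s) = [disjoint A & \bigcup_(B <- s) B] && disj s.
Proof.
rewrite /disj !big_cons cardsU -setI_eq0 -cards_eq0.
have := card_bigcup_le s.
have : (#|A :&: \bigcup_(B <- s) B| <= #|A|)%N by apply: subset_leq_card; apply: subsetIl.
move=> h1 h2.
apply/eqP/andP => [h|[/eqP h3 /eqP h4]]; [split; apply/eqP|]; lia.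
Qed.

Lemma disj_nil : disj [::].
Proof. by rewrite /disj !big_nil cards0. Qed.

Lemma disj_cat (s t : seq {set L}) :
  disj (s ++ t) = [&& [disjoint \bigcup_(A <- s) A & \bigcup_(B <- t) B], disj s & disj t].
Proof.
elim: s => [|A s IH]; first by rewrite big_nil /= disj_nil -setI_eq0 set0I eqxx.
rewrite cat_cons !disj_cons IH big_cat /= big_cons disjUl disjUr.
by case: [disjoint A & _]; case: [disjoint A & _]; case: [disjoint _ & \bigcup_(B <- t) B]; case: (disj s); case: (disj t).
Qed.

Lemma disj_perm (s t : seq {set L}) : perm_eq s t -> disj s = disj t.
Proof.
move=> p; have E : \bigcup_(A <- s) A = \bigcup_(A <- t) A by apply: perm_big.
by rewrite /disj E (perm_big _ p).
Qed.

Lemma bigcup_map_sub (f : {set L} -> {set L}) (s : seq {set L}) :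
  (forall A, A \in s -> f A \subset A) ->
  \bigcup_(A <- map f s) A \subset \bigcup_(A <- s) A.
Proof.
elim: s => [|A s IH] h; first by rewrite !big_nil.
rewrite /= !big_cons setUSS //; first by apply: h; rewrite inE eqxx.
by apply: IH => B Bs; apply: h; rewrite inE Bs orbT.
Qed.

Lemma disj_map_sub (f : {set L} -> {set L}) (s : seq {set L}) :
  (forall A, A \in s -> f A \subset A) -> disj s -> disj (map f s).
Proof.
elim: s => [|A s IH] h; first by [].
rewrite /= !disj_cons => /andP[d1 d2]; apply/andP; split.
  apply: disjointW d1; first by apply: h; rewrite inE eqxx.
  by apply: bigcup_map_sub => B Bs; apply: h; rewrite inE Bs orbT.
by apply: IH => // B Bs; apply: h; rewrite inE Bs orbT.
Qed.

Definition ok (s : seq H) := disj (map hdom s).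
Definition prodS (s : seq H) : H := foldr hmul hone s.

Lemma ok_cons a s : ok (a :: s) = [disjoint hdom a & \bigcup_(b <- s) hdom b] && ok s.
Proof. by rewrite /ok /= disj_cons big_map. Qed.

Lemma ok_cat (s t : seq H) :
  ok (s ++ t) = [&& [disjoint \bigcup_(a <- s) hdom a & \bigcup_(b <- t) hdom b], ok s & ok t].
Proof. by rewrite /ok map_cat disj_cat !big_map. Qed.

Lemma ok_perm (s t : seq H) : perm_eq s t -> ok s = ok t.
Proof. by move=> p; apply: disj_perm; apply: perm_map. Qed.

Lemma dom_prodS s : ok s -> hdom (prodS s) = \bigcup_(a <- s) hdom a.
Proof.
elim: s => [|a s IH]; first by rewrite big_nil dom1.
rewrite ok_cons big_cons => /andP[d o] /=.
by rewrite domM IH.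
Qed.

Lemma prodS_cat (s t : seq H) : ok (s ++ t) -> prodS (s ++ t) = hmul (prodS s) (prodS t).
Proof.
elim: s => [|a s IH]; first by rewrite /= (proj1 (mul1 _)).
rewrite cat_cons ok_cons => /andP[d o] /=.
move: (o); rewrite ok_cat => /and3P[d2 o1 o2].
rewrite big_cat /= disjUr in d; case/andP: d => d3 d4.
rewrite IH // mulA // ?dom_prodS //.
Qed.

Lemma mulC_dj a b : [disjoint hdom a & hdom b] -> hmul a b = hmul b a.
Proof. exact: comm. Qed.

Lemma prodS_rem (t : seq H) a : ok t -> a \in t -> prodS t = hmul a (prodS (rem a t)).
Proof.
elim: t => [|b t IH] //= o.
case: (eqVneq b a) => [->|ne]; first by [].
rewrite inE eq_sym (negbTE ne) /= => aIt.
move: (o); rewrite ok_cons => /andP[d o'].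
have o2 : ok (a :: rem a t) by rewrite -(ok_perm (perm_to_rem aIt)).
move: (o2); rewrite ok_cons => /andP[d2 o3].
have sa : hdom a \subset \bigcup_(c <- t) hdom c.
  by rewrite (big_rem a aIt) /=; apply: subsetUl.
have sr : \bigcup_(c <- rem a t) hdom c \subset \bigcup_(c <- t) hdom c.
  by rewrite (big_rem a aIt) /=; apply: subsetUr.
have dba : [disjoint hdom b & hdom a] by apply: disjointWr sa d.
have dbr : [disjoint hdom b & hdom (prodS (rem a t))].
  by rewrite dom_prodS //; apply: disjointWr sr d.
have dar : [disjoint hdom a & hdom (prodS (rem a t))] by rewrite dom_prodS.
rewrite IH // -mulA // (comm dba) mulA //.
by rewrite disjoint_sym.
Qed.

Lemma prodS_perm (s t : seq H) : ok s -> perm_eq s t -> prodS s = prodS t.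
Proof.
elim: s t => [|a s IH] t o p.
  by move: p; rewrite perm_sym => /perm_nilP ->.
have aIt : a \in t by rewrite -(perm_mem p) inE eqxx.
have ot : ok t by rewrite -(ok_perm p).
rewrite (prodS_rem ot aIt) /=; congr hmul.
apply: IH; first by move: o; rewrite ok_cons => /andP[].
by rewrite -(perm_cons a); apply: perm_trans p (perm_to_rem aIt).
Qed.

Lemma prodS_flatten (ss : seq (seq H)) : ok (flatten ss) -> prodS (flatten ss) = prodS (map prodS ss).
Proof.
elim: ss => [|s ss IH] //= o.
rewrite prodS_cat // IH //.
by move: o; rewrite ok_cat => /and3P[].
Qed.

Lemma okres (s : seq {set L}) x : all (fun B : {set L} => B \subset hdom x) s ->
  ok [seq res B x | B <- s] = disj s.
Proof.
move=> /allP h; rewrite /ok -map_comp; congr disj.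
by rewrite -[RHS]map_id; apply/eq_in_map => B Bs /=; rewrite res_dom //; apply: h.
Qed.

Lemma bigcup_res (s : seq {set L}) x : all (fun B : {set L} => B \subset hdom x) s ->
  \bigcup_(a <- [seq res B x | B <- s]) hdom a = \bigcup_(B <- s) B.
Proof.
move=> /allP h; rewrite big_map; apply: eq_big_seq => B Bs; rewrite res_dom //; exact: h.
Qed.

Lemma reassembleE (s : seq {set L}) x : disj s -> all (fun B : {set L} => B \subset hdom x) s ->
  reassemble s x = hmul (prodS [seq res B x | B <- s]) (res (hdom x :\: \bigcup_(B <- s) B) x).
Proof.
elim: s x => [|B s IH] x ds als.
  by rewrite /= big_nil setD0 res_all (proj1 (mul1 _)).
move: ds; rewrite disj_cons => /andP[dB ds].
move: als => /= /andP[sB als].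
have x'dom : hdom (res (hdom x :\: B) x) = hdom x :\: B by rewrite res_dom // subsetDl.
have als' : all (fun C : {set L} => C \subset hdom (res (hdom x :\: B) x)) s.
  apply/allP => C Cs; rewrite x'dom; apply/subsetP => z zC; rewrite inE.
  have zU : z \in \bigcup_(C <- s) C by rewrite (big_rem C Cs) inE zC.
  rewrite (disjointFl dB zU) /=.
  by move/allP: als => /(_ C Cs) /subsetP; apply.
rewrite /= (delta2 sB) IH // x'dom.
have E1 : [seq res C (res (hdom x :\: B) x) | C <- s] = [seq res C x | C <- s].
  apply/eq_in_map => C Cs; rewrite resK ?subsetDl //.
  by move/allP: als' => /(_ C Cs); rewrite x'dom.
rewrite E1 resK ?subsetDl // ?setDDl ?big_cons -/(res B x) //.
have alx : all (fun C : {set L} => C \subset hdom x) s.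
  by apply/allP => C Cs; move/allP: als' => /(_ C Cs); rewrite x'dom => h; apply: subset_trans h (subsetDl _ _).
have okP : ok [seq res C x | C <- s] by rewrite okres.
have sD : hdom x :\: (B :|: \bigcup_(j <- s) j) \subset hdom x by apply: subsetDl.
rewrite mulA // ?dom_prodS ?res_dom ?bigcup_res //.
- by apply: disjI => z zB; rewrite !inE zB.
- by apply: disjI => z zU; rewrite !inE zU orbT.
Qed.

Definition spl (P : {set {set L}}) (x : H) : H := prodS [seq res B x | B <- enum P].

Lemma disj_enum (P : {set {set L}}) : disj (enum P) = trivIset P.
Proof. by rewrite /disj /trivIset /cover !big_enum. Qed.

Lemma all_enum_sub (P : {set {set L}}) D : cover P = D -> all (fun B : {set L} => B \subset D) (enum P).
Proof. by move=> <-; apply/allP => B; rewrite mem_enum => BP; apply: bigcup_sup. Qed.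

Lemma reassemble_spl (P : {set {set L}}) x : partition P (hdom x) -> reassemble (enum P) x = spl P x.
Proof.
case/and3P => /eqP cP tP _.
rewrite reassembleE ?disj_enum ?all_enum_sub //.
have -> : \bigcup_(B <- enum P) B = hdom x by rewrite big_enum.
by rewrite setDv res0 (proj2 (mul1 _)).
Qed.

Lemma dom_spl (P : {set {set L}}) x : partition P (hdom x) -> hdom (spl P x) = hdom x.
Proof.
case/and3P => /eqP cP tP _.
rewrite /spl dom_prodS ?okres ?disj_enum ?all_enum_sub // bigcup_res ?all_enum_sub //.
by rewrite big_enum.
Qed.

Lemma le_rP x w : reflect (exists2 P, partition P (hdom x) & w = spl P x) (le_r x w).
Proof.
apply: (iffP existsP) => [[P /andP[pP /eqP ->]]|[P pP ->]]; exists P => //.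
  by rewrite reassemble_spl.
by rewrite pP reassemble_spl // eqxx.
Qed.

Lemma le_r_dom x w : le_r x w -> hdom w = hdom x.
Proof. by case/le_rP => P pP ->; rewrite dom_spl. Qed.

Definition nz (A : {set L}) : bool := A != set0.
Definition nzs (s : seq {set L}) : {set {set L}} := [set A in s | A != set0].

Lemma bigcup_filter0 (s : seq {set L}) : \bigcup_(A <- filter nz s) A = \bigcup_(A <- s) A.
Proof.
elim: s => [|A s IH] //=; rewrite big_cons /nz; case: eqP => [->|_]; rewrite ?big_cons IH //.
by rewrite set0U.
Qed.

Lemma disj_filter0 (s : seq {set L}) : disj (filter nz s) = disj s.
Proof.
elim: s => [|A s IH] //=; rewrite disj_cons /nz; case: eqP => [->|_]; rewrite ?disj_cons ?IH ?bigcup_filter0 //.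
by rewrite -setI_eq0 set0I eqxx.
Qed.

Lemma uniq_nz (s : seq {set L}) : disj s -> uniq (filter nz s).
Proof.
elim: s => [|A s IH] //=; rewrite disj_cons => /andP[d ds].
case: ifP => [nA|_]; last exact: IH.
rewrite /= IH // andbT mem_filter nA /=; apply/negP => As.
have : [disjoint A & A] by apply: disjointWr d; rewrite (big_rem A As) subsetUl.
by rewrite -setI_eq0 setIid (negbTE nA).
Qed.

Lemma perm_nz (s : seq {set L}) : disj s -> perm_eq (filter nz s) (enum (nzs s)).
Proof.
move=> ds; apply: uniq_perm; first exact: uniq_nz; first exact: enum_uniq.
by move=> A; rewrite mem_filter mem_enum inE andbC.
Qed.

Lemma prodS_filter0 (s : seq {set L}) x :
  prodS [seq res B x | B <- s] = prodS [seq res B x | B <- filter nz s].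
Proof.
elim: s => [|A s IH] //=; rewrite /nz; case: eqP => [->|_] /=; rewrite IH //.
by rewrite res0 (proj1 (mul1 _)).
Qed.

Lemma normE (s : seq {set L}) x : disj s -> all (fun B : {set L} => B \subset hdom x) s ->
  prodS [seq res B x | B <- s] = spl (nzs s) x.
Proof.
move=> ds als; rewrite prodS_filter0 /spl; apply: prodS_perm.
  by rewrite okres ?disj_filter0 // all_filter; apply/allP => B Bs; apply/implyP => _; move/allP: als; apply.
by apply: perm_map; apply: perm_nz.
Qed.

Lemma partition_nzs (s : seq {set L}) D : disj s -> \bigcup_(A <- s) A = D -> partition (nzs s) D.
Proof.
move=> ds U; apply/and3P; split.
- rewrite /cover -big_enum -(perm_big _ (perm_nz ds)) /= bigcup_filter0 U //.
- by rewrite -disj_enum -(disj_perm (perm_nz ds)) disj_filter0.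
- by rewrite inE eqxx andbF.
Qed.

Lemma resi_prodS (C : {set L}) s : ok s -> resi C (prodS s) = prodS (map (resi C) s).
Proof.
elim: s => [|a s IH] /=; first by rewrite resi_one.
rewrite ok_cons => /andP[d o]; rewrite resi_mul ?IH // dom_prodS //.
Qed.

Lemma bigcup_flatten (ss : seq (seq {set L})) :
  \bigcup_(A <- flatten ss) A = \bigcup_(A <- [seq \bigcup_(B <- s) B | s <- ss]) A.
Proof. by rewrite big_flatten big_map. Qed.

Lemma disj_flatten (ss : seq (seq {set L})) :
  disj (flatten ss) = all disj ss && disj [seq \bigcup_(B <- s) B | s <- ss].
Proof.
elim: ss => [|s ss IH] /=; first by rewrite disj_nil.
rewrite disj_cat disj_cons IH (bigcup_flatten ss).
by apply/and4P/and3P => [[a b c d]|[/andP[b c] a d]]; split => //; apply/andP.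
Qed.

Lemma bigcup_setI (C : {set L}) (s : seq {set L}) :
  \bigcup_(A <- [seq C :&: B | B <- s]) A = C :&: \bigcup_(B <- s) B.
Proof.
elim: s => [|B s IH] /=; first by rewrite !big_nil setI0.
by rewrite !big_cons IH setIUr.
Qed.

Definition meetL (Q P : {set {set L}}) : seq {set L} :=
  flatten [seq [seq C :&: B | B <- enum P] | C <- enum Q].

Lemma mem_meetL Q P A :
  A \in meetL Q P <-> exists C B, [/\ C \in Q, B \in P & A = C :&: B].
Proof.
split.
  case/flattenP => s /mapP[C CQ ->] /mapP[B BP ->].
  by exists C, B; split => //; rewrite -mem_enum.
case=> C [B [CQ BP ->]]; apply/flattenP.
exists [seq C :&: B0 | B0 <- enum P]; first by apply/mapP; exists C; rewrite ?mem_enum.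
by apply/mapP; exists B; rewrite ?mem_enum.
Qed.

Lemma meetL_disj Q P : trivIset P -> trivIset Q -> disj (meetL Q P).
Proof.
move=> tP tQ; rewrite /meetL disj_flatten; apply/andP; split.
  apply/allP => s /mapP[C CQ ->]; apply: disj_map_sub; last by rewrite disj_enum.
  by move=> A _; apply: subsetIr.
rewrite -map_comp; apply: disj_map_sub; last by rewrite disj_enum.
by move=> C _ /=; rewrite bigcup_setI subsetIl.
Qed.

Lemma meetL_cover Q P D : cover P = D -> cover Q = D -> \bigcup_(A <- meetL Q P) A = D.
Proof.
move=> cP cQ; rewrite /meetL (bigcup_flatten [seq [seq C :&: B | B <- enum P] | C <- enum Q]).
have -> : [seq (\bigcup_(B <- s) B) | s <- [seq [seq C :&: B | B <- enum P] | C <- enum Q]]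
   = [seq D :&: C | C <- enum Q].
  rewrite -map_comp; apply/eq_in_map => C CQ /=; rewrite bigcup_setI big_enum.
  by rewrite -/(cover P) cP setIC.
by rewrite bigcup_setI big_enum -/(cover Q) cQ setIid.
Qed.

Lemma meetL_sub Q P D : cover P = D -> all (fun B : {set L} => B \subset D) (meetL Q P).
Proof.
move=> cP; apply/allP => A /mem_meetL [C [B [CQ BP ->]]].
by rewrite -cP; apply: subset_trans (subsetIr _ _) _; apply: bigcup_sup.
Qed.

Lemma spl_spl (P Q : {set {set L}}) x : partition P (hdom x) -> partition Q (hdom x) ->
  spl Q (spl P x) = spl (nzs (meetL Q P)) x.
Proof.
move=> pP pQ; move: (pP) (pQ) => /and3P[/eqP cP tP _] /and3P[/eqP cQ tQ _].
have okP : ok [seq res B x | B <- enum P] by rewrite okres ?disj_enum ?all_enum_sub.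
rewrite -(@normE (meetL Q P) x) ?meetL_disj ?(meetL_sub _ cP) //.
rewrite /spl /meetL map_flatten prodS_flatten; last first.
  by rewrite -map_flatten okres ?meetL_disj ?(meetL_sub _ cP).
rewrite -!map_comp; congr prodS; apply/eq_in_map => C; rewrite mem_enum => CQ /=.
rewrite -resiE; last by rewrite dom_spl // -cQ; apply: bigcup_sup.
rewrite resi_prodS // -map_comp -map_comp; congr prodS; apply/eq_in_map => B.
rewrite mem_enum => BP /=; rewrite resi_res //.
by rewrite -cP; apply: bigcup_sup.
Qed.

Lemma le_r_trans (x w z : H) : le_r x w -> le_r w z -> le_r x z.
Proof.
case/le_rP => P pP ->; case/le_rP => Q; rewrite dom_spl // => pQ ->.
apply/le_rP; exists (nzs (meetL Q P)); last by rewrite spl_spl.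
move: (pP) (pQ) => /and3P[/eqP cP tP _] /and3P[/eqP cQ tQ _].
by apply: partition_nzs; [apply: meetL_disj | apply: meetL_cover].
Qed.

Lemma le_r_refl (x : H) : le_r x x.
Proof.
have d : disj [:: hdom x] by rewrite disj_cons disj_nil big_nil -setI_eq0 setI0 eqxx.
have U : \bigcup_(A <- [:: hdom x]) A = hdom x by rewrite big_cons big_nil setU0.
apply/le_rP; exists (nzs [:: hdom x]); first exact: partition_nzs.
rewrite -normE //= ?subxx //.
by rewrite res_all (proj2 (mul1 _)).
Qed.

Lemma le_r_anti (x w : H) : le_r x w -> le_r w x -> w = x.
Proof.
case/le_rP => P pP ->; case/le_rP => Q; rewrite dom_spl // => pQ.
move: (pP) (pQ) => /and3P[/eqP cP tP _] /and3P[/eqP cQ tQ _].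
rewrite spl_spl // => Ex.
set R := nzs (meetL Q P) in Ex.
have pR : partition R (hdom x) by apply: partition_nzs; [apply: meetL_disj | apply: meetL_cover].
rewrite Ex spl_spl // -Ex.
suff -> : nzs (meetL P R) = R by [].
apply/setP => A; rewrite !inE; apply/andP/andP => [[/mem_meetL [C [B [CP BR EA]]] nA]|[AQP nA]].
  move: BR; rewrite inE => /andP[/mem_meetL [C' [B' [C'Q B'P EB]]] nB].
  have EA' : A = C' :&: (C :&: B') by rewrite EA EB setICA.
  case: (eqVneq C B') => [eCB|neCB].
    split => //; rewrite EA EB eCB setIC -setIA setIid.
    by apply/mem_meetL; exists C', B'.
  move/trivIsetP: tP => /(_ C B' CP B'P neCB) /disjoint_setI0 e0.
  by move: nA; rewrite EA' e0 setI0 eqxx.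
split => //; apply/mem_meetL.
case/mem_meetL: (AQP) => C' [B' [C'Q B'P EA]].
exists B', A; split => //; first by rewrite inE AQP.
by rewrite EA setICA setIid.
Qed.

Lemma disjII (A1 A2 X1 X2 : {set L}) : [disjoint A1 & A2] || [disjoint X1 & X2] ->
  [disjoint A1 :&: X1 & A2 :&: X2].
Proof.
case/orP => d; apply: disjointW d; by rewrite ?subsetIl ?subsetIr.
Qed.

Lemma mul4 (a b c d : H) :
  [disjoint hdom a & hdom b] -> [disjoint hdom a & hdom c] -> [disjoint hdom a & hdom d] ->
  [disjoint hdom b & hdom c] -> [disjoint hdom b & hdom d] -> [disjoint hdom c & hdom d] ->
  hmul (hmul a b) (hmul c d) = hmul (hmul a c) (hmul b d).
Proof.
move=> ab ac ad bc bd cd.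
have o : ok [:: a; b; c; d].
  rewrite !ok_cons !big_cons !big_nil !setU0 !disjUr ab ac ad bc bd cd /ok /= disj_nil.
  by rewrite andbT -setI_eq0 setI0.
have E (p q : H) : hmul p q = prodS [:: p; q] by rewrite /= (proj2 (mul1 _)).
have p : perm_eq [:: a; b; c; d] [:: a; c; b; d].
  rewrite (perm_cons a); change (perm_eq ([:: b] ++ [:: c] ++ [:: d]) ([:: c] ++ [:: b] ++ [:: d])).
  by rewrite perm_catCA.
have o' : ok [:: a; c; b; d] by rewrite -(ok_perm p).
rewrite (E a b) (E c d) (E a c) (E b d) -!prodS_cat //=.
by move: (prodS_perm o p) => /=.
Qed.

Lemma res_mul_split (u v : H) (B : {set L}) : [disjoint hdom u & hdom v] ->
  B \subset hdom u :|: hdom v ->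
  res B (hmul u v) = hmul (res (hdom u :&: B) u) (res (hdom v :&: B) v).
Proof.
move=> d sB; rewrite -resiE ?domM // resi_mul // /resi setIC.
by rewrite [B :&: hdom v]setIC.
Qed.

Lemma res_left (u v : H) : [disjoint hdom u & hdom v] -> res (hdom u) (hmul u v) = u.
Proof.
move=> d; rewrite res_mul_split ?subsetUl // setIid res_all.
by rewrite disjoint_sym in d; rewrite (disjoint_setI0 d) res0 (proj2 (mul1 _)).
Qed.

Lemma res_right (u v : H) : [disjoint hdom u & hdom v] -> res (hdom v) (hmul u v) = v.
Proof.
move=> d; rewrite res_mul_split ?subsetUr // setIid res_all.
by rewrite (disjoint_setI0 d) res0 (proj1 (mul1 _)).
Qed.

Lemma ok_resI (x : H) (s : seq {set L}) : disj s ->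
  ok [seq res A x | A <- [seq hdom x :&: B | B <- s]].
Proof.
move=> ds; rewrite okres; first by apply: disj_map_sub => // A _; apply: subsetIr.
by apply/allP => A /mapP[B _ ->]; apply: subsetIl.
Qed.

Lemma dom_prodS_resI (x : H) (s : seq {set L}) : disj s ->
  hdom (prodS [seq res A x | A <- [seq hdom x :&: B | B <- s]]) = hdom x :&: \bigcup_(B <- s) B.
Proof.
move=> ds; rewrite dom_prodS ?ok_resI // bigcup_res ?bigcup_setI //.
by apply/allP => A /mapP[B _ ->]; apply: subsetIl.
Qed.

Lemma prodS_split (x y : H) (s : seq {set L}) : [disjoint hdom x & hdom y] -> disj s ->
  all (fun B : {set L} => B \subset hdom x :|: hdom y) s ->
  prodS [seq res B (hmul x y) | B <- s] =
  hmul (prodS [seq res A x | A <- [seq hdom x :&: B | B <- s]])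
       (prodS [seq res A y | A <- [seq hdom y :&: B | B <- s]]).
Proof.
move=> dxy; elim: s => [|B s IH] ds als /=; first by rewrite (proj1 (mul1 _)).
move: ds; rewrite disj_cons => /andP[dB ds]; case/andP: als => sB als.
rewrite IH // res_mul_split //.
have dxyS : [disjoint hdom y & hdom x] by rewrite disjoint_sym.
apply: mul4; rewrite ?res_dom ?subsetIl ?dom_prodS_resI //; apply: disjII;
  by rewrite ?dxy ?dxyS ?dB ?orbT.
Qed.

Lemma partition_resI (x : H) (P : {set {set L}}) D : cover P = D -> trivIset P -> hdom x \subset D ->
  partition (nzs [seq hdom x :&: B | B <- enum P]) (hdom x).
Proof.
move=> cP tP sx; apply: partition_nzs.
  by apply: disj_map_sub; rewrite ?disj_enum // => A _; apply: subsetIr.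
by rewrite bigcup_setI big_enum -/(cover P) cP; apply/setIidPl.
Qed.

Lemma le_r_mul_inv (x y w : H) : [disjoint hdom x & hdom y] -> le_r (hmul x y) w ->
  exists u v, [/\ le_r x u, le_r y v & w = hmul u v].
Proof.
move=> dxy /le_rP [P]; rewrite domM // => pP ->.
move: (pP) => /and3P[/eqP cP tP _].
rewrite /spl prodS_split ?disj_enum ?all_enum_sub //.
have dm (z : H) : disj [seq hdom z :&: B | B <- enum P].
  by apply: disj_map_sub; rewrite ?disj_enum // => A _; apply: subsetIr.
have al (z : H) : all (fun B : {set L} => B \subset hdom z) [seq hdom z :&: B | B <- enum P].
  by apply/allP => A /mapP[B _ ->]; apply: subsetIl.
rewrite !normE //.
exists (spl (nzs [seq hdom x :&: B | B <- enum P]) x), (spl (nzs [seq hdom y :&: B | B <- enum P]) y).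
split => //; apply/le_rP.
  by eexists; last reflexivity; apply: (@partition_resI x P _ cP tP); apply: subsetUl.
by eexists; last reflexivity; apply: (@partition_resI y P _ cP tP); apply: subsetUr.
Qed.

Lemma le_r_mul (x y u v : H) : [disjoint hdom x & hdom y] -> le_r x u -> le_r y v ->
  le_r (hmul x y) (hmul u v).
Proof.
move=> dxy /le_rP [P1 pP1 ->] /le_rP [P2 pP2 ->].
move: (pP1) (pP2) => /and3P[/eqP cP1 tP1 _] /and3P[/eqP cP2 tP2 _].
have ds : disj (enum P1 ++ enum P2).
  by rewrite disj_cat !disj_enum tP1 tP2 !big_enum -/(cover P1) -/(cover P2) cP1 cP2 dxy.
have U : \bigcup_(A <- enum P1 ++ enum P2) A = hdom (hmul x y).
  by rewrite big_cat /= !big_enum -/(cover P1) -/(cover P2) cP1 cP2 domM.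
have al : all (fun B : {set L} => B \subset hdom (hmul x y)) (enum P1 ++ enum P2).
  apply/allP => B BP; rewrite -U (big_rem B BP) /=; apply: subsetUl.
apply/le_rP; exists (nzs (enum P1 ++ enum P2)); first exact: partition_nzs.
rewrite -normE // map_cat prodS_cat; last by rewrite -map_cat okres.
rewrite /spl; congr hmul; congr prodS; apply/eq_in_map => B; rewrite mem_enum => BP /=.
  have sB : B \subset hdom x by rewrite -cP1; apply: bigcup_sup.
  rewrite res_mul_split //; last by apply: subset_trans sB (subsetUl _ _).
  rewrite (setIidPr sB) (_ : hdom y :&: B = set0) ?res0 ?(proj2 (mul1 _)) //.
  by apply: disjoint_setI0; apply: disjointWr sB _; rewrite disjoint_sym.
have sB : B \subset hdom y by rewrite -cP2; apply: bigcup_sup.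
rewrite res_mul_split //; last by apply: subset_trans sB (subsetUr _ _).
rewrite (setIidPr sB) (_ : hdom x :&: B = set0) ?res0 ?(proj1 (mul1 _)) //.
by apply: disjoint_setI0; apply: disjointWr sB _.
Qed.

Lemma mul_inj (u v u' v' : H) : [disjoint hdom u & hdom v] -> hdom u' = hdom u -> hdom v' = hdom v ->
  hmul u v = hmul u' v' -> u = u' /\ v = v'.
Proof.
move=> d du dv E.
have d' : [disjoint hdom u' & hdom v'] by rewrite du dv.
split.
  by rewrite -(res_left d) E -du res_left.
by rewrite -(res_right d) E -dv res_right.
Qed.

Lemma le_r_mulE (u v u' v' : H) : [disjoint hdom u & hdom v] -> hdom u' = hdom u -> hdom v' = hdom v ->
  le_r (hmul u v) (hmul u' v') = le_r u u' && le_r v v'.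
Proof.
move=> d du dv; apply/idP/andP => [|[h1 h2]]; last exact: le_r_mul.
case/(le_r_mul_inv d) => u'' [v'' [h1 h2 E]].
have [<- <-] : u'' = u' /\ v'' = v'.
  by apply: mul_inj; rewrite ?(le_r_dom h1) ?(le_r_dom h2) ?du ?dv.
by split.
Qed.

Definition hgt (a b : H) : nat := #|[set c | le_r a c && lt_r c b]|.

Lemma hgt_lt (a b c : H) : le_r a c -> lt_r c b -> (hgt a c < hgt a b)%N.
Proof.
move=> ac cb; apply: proper_card; apply/properP; split.
  apply/subsetP => c'; rewrite !inE => /andP[ac' /andP[ne c'c]].
  move: cb => /andP[nbc cb].
  rewrite ac' /lt_r (le_r_trans c'c cb) andbT /=.
  apply/eqP => ebc; move: c'c; rewrite -ebc => bc.
  by move: nbc; rewrite (le_r_anti cb bc) eqxx.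
by exists c; rewrite !inE ?ac ?cb // /lt_r eqxx.
Qed.

Local Open Scope ring_scope.

Lemma fuel_stab (R : pzRingType) n m (a b : H) : (hgt a b < n)%N -> (hgt a b < m)%N ->
  mobius_fuel R n a b = mobius_fuel R m a b.
Proof.
elim: n m a b => [|n IH] [|m] a b //= hn hm.
case: (a == b) => //; case: (le_r a b) => //; congr (- _).
apply: eq_bigr => c /andP[ac cb]; have := hgt_lt ac cb => h.
apply: IH; lia.
Qed.

Lemma hgt_max (a b : H) : (hgt a b <= #|H|)%N.
Proof. exact: max_card. Qed.

Lemma mobius_rec (R : pzRingType) (a b : H) : mobius R a b =
  if a == b then 1 else if le_r a b then - \sum_(c | le_r a c && lt_r c b) mobius R a c else 0.
Proof.
rewrite /mobius /=; case: (a == b) => //; case: (le_r a b) => //; congr (- _).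
apply: eq_bigr => c /andP[ac cb]; have := hgt_lt ac cb => h; have := hgt_max a b => h2.
change (mobius_fuel R #|H| a c = mobius_fuel R #|H|.+1 a c); apply: fuel_stab; lia.
Qed.

Lemma mobius_refl (R : pzRingType) (a : H) : mobius R a a = 1.
Proof. by rewrite mobius_rec eqxx. Qed.

Lemma mobius_sum (R : pzRingType) (a b : H) : le_r a b ->
  \sum_(c | le_r a c && le_r c b) mobius R a c = (a == b)%:R.
Proof.
move=> ab; case: (eqVneq a b) => [<-|ne].
  rewrite (bigD1 a) /= ?le_r_refl // big1 => [|c /andP[/andP[ac ca] nca]].
    by rewrite mobius_refl addr0.
  by move: nca; rewrite (le_r_anti ac ca) eqxx.
rewrite (bigD1 b) /= ?le_r_refl ?ab // mobius_rec (negbTE ne) ab.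
rewrite (eq_bigl (fun c => le_r a c && lt_r c b)) ?addNr //.
move=> c /=; rewrite /lt_r eq_sym; case: (le_r a c) => //=; by rewrite andbC.
Qed.

Lemma mobius_mul (R : pzRingType) (x y u v : H) : [disjoint hdom x & hdom y] -> le_r x u -> le_r y v ->
  mobius R (hmul x y) (hmul u v) = mobius R x u * mobius R y v.
Proof.
move=> dxy; move: u v.
suff key : forall n u v, (hgt (hmul x y) (hmul u v) < n)%N -> le_r x u -> le_r y v ->
  mobius R (hmul x y) (hmul u v) = mobius R x u * mobius R y v.
  by move=> u v; apply: key (ltnSn _).
elim=> [|n IH] u v hn xu yv; first by rewrite ltn0 in hn.
have du := le_r_dom xu; have dv := le_r_dom yv.
have duv : [disjoint hdom u & hdom v] by rewrite du dv.
case: (eqVneq (hmul x y) (hmul u v)) => [E|ne].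
  by have [<- <-] := mul_inj dxy du dv E; rewrite !mobius_refl mulr1.
rewrite mobius_rec (negbTE ne) le_r_mul //.
pose Q' := fun p : H * H => (le_r x p.1 && le_r p.1 u) && (le_r y p.2 && le_r p.2 v).
pose Q := fun p : H * H => Q' p && (p != (u, v)).
have QP p : Q p -> le_r (hmul x y) (hmul p.1 p.2) && lt_r (hmul p.1 p.2) (hmul u v).
  case/andP => /andP[/andP[h1 h2] /andP[h3 h4]] np.
  have d1 := le_r_dom h1; have d3 := le_r_dom h3.
  rewrite le_r_mul //= /lt_r le_r_mul ?d1 ?d3 // andbT.
  apply/eqP => E; have [e1 e2] := mul_inj duv (etrans d1 (esym du)) (etrans d3 (esym dv)) E.
  by move: np; rewrite e1 e2; case: p {h1 h2 h3 h4 d1 d3 E e1 e2} => ? ? /=; rewrite eqxx.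
have E1 : \sum_(w | le_r (hmul x y) w && lt_r w (hmul u v)) mobius R (hmul x y) w =
          \sum_(p | Q p) mobius R x p.1 * mobius R y p.2.
  rewrite (reindex_onto (fun p : H * H => hmul p.1 p.2) (fun w => (res (hdom x) w, res (hdom y) w))); last first.
    move=> w /andP[/(le_r_mul_inv dxy) [u' [v' [h1 h2 ->]]] _].
    have d' : [disjoint hdom u' & hdom v'] by rewrite (le_r_dom h1) (le_r_dom h2).
    by rewrite /= -{1}(le_r_dom h1) -(le_r_dom h2) res_left ?res_right.
  rewrite (eq_bigl Q); last first.
  move=> p; apply/idP/idP => [|Qp]; last first.
    rewrite QP //=; case: p Qp => p1 p2 /andP[/andP[/andP[a1 _] /andP[a3 _]] _] /=.
    have d' : [disjoint hdom p1 & hdom p2] by rewrite (le_r_dom a1) (le_r_dom a3).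
    by rewrite -{1}(le_r_dom a1) -(le_r_dom a3) res_left ?res_right.
  case: p => p1 p2 /= /andP[/andP[h1 h2] /eqP E].
  case/(le_r_mul_inv dxy): h1 => [u'' [v'' [h1 h3 E2]]].
  have d'' : [disjoint hdom u'' & hdom v''] by rewrite (le_r_dom h1) (le_r_dom h3).
  have e1 : p1 = u'' by move: E => [<- _]; rewrite E2 -(le_r_dom h1) res_left.
  have e2 : p2 = v'' by move: E => [_ <-]; rewrite E2 -(le_r_dom h3) res_right.
  subst p1 p2; move: h2; rewrite /lt_r => /andP[nE h2].
  move: h2; rewrite le_r_mulE // ?(le_r_dom h1) ?(le_r_dom h3) // => /andP[h2 h4].
  rewrite /Q /Q' /= h1 h2 h3 h4 /=; apply: contra nE => /eqP [-> ->]; by [].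
  apply: eq_bigr => p Qp.
  case/andP: (QP p Qp) => h1 h2; move: Qp => /andP[/andP[/andP[a1 _] /andP[a3 _]] _].
  apply: IH => //; have := hgt_lt h1 h2; lia.
have E2 : \sum_(p | Q' p) mobius R x p.1 * mobius R y p.2 = 0.
  rewrite -(pair_big_dep (fun u' => le_r x u' && le_r u' u) (fun _ v' => le_r y v' && le_r v' v)
     (fun a b => mobius R x a * mobius R y b)) /=.
  rewrite -big_distrlr /= !mobius_sum //.
  case: eqP => [exu|]; case: eqP => [eyv|]; rewrite ?mul0r ?mulr0 //.
  by move: ne; rewrite exu eyv eqxx.
move: E2; rewrite (bigD1 (u, v)) /=; last by rewrite /Q' /= xu yv !le_r_refl.
rewrite E1 => /eqP; rewrite addrC addr_eq0 => /eqP ->.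
by rewrite opprK.
Qed.

Lemma sum_pick2 (R : pzRingType) (P1 P2 : pred H) (u0 v0 : H) (c : R) :
  \sum_(u | P1 u) \sum_(v | P2 v) (if (u == u0) && (v == v0) then c else 0) =
  if P1 u0 && P2 v0 then c else 0.
Proof.
rewrite (pair_big_dep P1 (fun _ => P2) (fun u v => if (u == u0) && (v == v0) then c else 0)) /=.
case: (boolP (P1 u0 && P2 v0)) => h.
  rewrite (bigD1 (u0, v0)) //= !eqxx /= big1 ?addr0 // => p /andP[_ ne].
  case: ifP => // /andP[/eqP e1 /eqP e2]; move: ne; case: p e1 e2 => a b /= -> ->.
  by rewrite eqxx.
apply: big1 => p /andP[h1 h2]; case: ifP => // /andP[/eqP e1 /eqP e2].
by move: h; rewrite -e1 -e2 h1 h2.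
Qed.

Lemma main_core (R : pzRingType) (S T : {set L}) (x y : H) :
  [disjoint S & T] -> hdom x = S -> hdom y = T ->
  kprod S T (omega R x) (omega R y) = omega R (hmul x y).
Proof.
move=> dST dx dy; have dxy : [disjoint hdom x & hdom y] by rewrite dx dy.
apply/ffunP => w; rewrite !ffunE.
set u0 := res S w; set v0 := res T w.
set C := hmul u0 v0 == w.
have step : forall u v, hdom u == S -> hdom v == T ->
  (if hmul u v == w then omega R x u * omega R y v else 0) =
  if (u == u0) && (v == v0) then (if C then omega R x u0 * omega R y v0 else 0) else 0.
  move=> u v /eqP du /eqP dv.
  have duv : [disjoint hdom u & hdom v] by rewrite du dv.
  case: (eqVneq (hmul u v) w) => [E|ne].
    have e1 : u = u0 by rewrite /u0 -E -du res_left.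
    have e2 : v = v0 by rewrite /v0 -E -dv res_right.
    by rewrite -e1 -e2 !eqxx /C -e1 -e2 E eqxx.
  case: (eqVneq u u0) => [e1|]; case: (eqVneq v v0) => [e2|] //=.
  by rewrite /C -e1 -e2 (negbTE ne).
rewrite (eq_bigr (fun u => \sum_(v | hdom v == T)
   (if (u == u0) && (v == v0) then (if C then omega R x u0 * omega R y v0 else 0) else 0))); last first.
  by move=> u du; apply: eq_bigr => v dv; apply: step.
rewrite sum_pick2.
case: (boolP (le_r (hmul x y) w)) => hw.
  case/(le_r_mul_inv dxy): (hw) => u' [v' [h1 h2 E]].
  have du' := le_r_dom h1; have dv' := le_r_dom h2.
  have d' : [disjoint hdom u' & hdom v'] by rewrite du' dv'.
  have e1 : u0 = u' by rewrite /u0 E -dx -du' res_left.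
  have e2 : v0 = v' by rewrite /v0 E -dy -dv' res_right.
  rewrite /C e1 e2 -E eqxx du' dv' dx dy !eqxx /= !ffunE h1 h2.
  by rewrite E mobius_mul.
case: ifP => // _; case: ifP => // /eqP E.
rewrite !ffunE; case: ifP => h1; case: ifP => h2; rewrite ?mulr0 ?mul0r //.
by move: hw; rewrite -E le_r_mul.
Qed.

End Core.

Local Open Scope ring_scope.
Theorem mainTheorem12 (k : fieldType) (Hk : [pchar k] =i pred0)
  (L : finType) (H : setHopfData L)
  (HH : is_set_Hopf_monoid H) (Hc : is_commutative H) (Hcc : is_cocommutative H)
  (S T : {set L}) (HST : [disjoint S & T]) (x y : H)
  (Hx : hdom x = S) (Hy : hdom y = T) :
  kprod S T (omega k x) (omega k y) = omega k (hmul x y).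
Proof.
case: HH => [[d1 d0E dRel [r1 rM rEq]] [[dM dD natM] [[natD mA m1 coA] [cu cp]]]].
apply: main_core => //.
Qed.
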